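(* Let $n\ge 1$ and let $f$ be the $n$-ary operation on $\mathbb{Z}_8$ given by $f(\mathbf{x})=x_1x_2\cdots x_n\sum_{\alpha\in I_n}b_\alpha\mathbf{x}^\alpha$, where every $b_\alpha\in\mathbb{Z}_8$ is even. Then $f$ preserves the relation $Z$.
   Context: $I_n$ is the set of all $n$-tuples $\alpha\in\{0,1,2\}^n$ with at most two nonzero components, and $\mathbf{x}^\alpha=x_1^{\alpha_1}\cdots x_n^{\alpha_n}$. $P_4$ is the power set of $\{1,2,3,4\}$. For $A\in P_4$, $\mathbf{g}^A\in\mathbb{Z}_8^{P_4}$ is the tuple with $B$-component $1$ if $A\subseteq B$ and $0$ otherwise. Every $\mathbf{u}\in\mathbb{Z}_8^{P_4}$ has a unique expression $\mathbf{u}=\sum_{A\in P_4}a_A\mathbf{g}^A$ with $a_A\in\mathbb{Z}_8$. $Z\subseteq \mathbb{Z}_8^{P_4}$ (a $16$-ary relation) consists of all $\mathbf{u}$ whose coefficients satisfy: (Z1) $a_{\{2\}}\equiv 2a_{\{1\}}\pmod 4$ and $a_{\{4\}}\equiv 2a_{\{3\}}\pmod 4$; (Z2) $a_A\equiv 0\pmod 2$ whenever $|A|\ge 2$; (Z3) $a_A\equiv 0\pmod 4$ whenever $|A|\ge 2$ and $A\cap\{2,4\}\neq\emptyset$; (Z4) $a_A=0$ whenever $\{2,4\}\subseteq A$. An $n$-ary operation $f$ preserves $Z$ if applying $f$ componentwise to any $\mathbf{u}^{(1)},\dots,\mathbf{u}^{(n)}\in Z$ yields an element of $Z$. *)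

(* Defs.v *)
From mathcomp Require Import all_boot all_order all_algebra.
Set Implicit Arguments. Unset Strict Implicit. Unset Printing Implicit Defensive.
Import GRing.Theory.
Local Open Scope ring_scope.

Notation Z8 := 'Z_8.

(* P_4 = power set of {1,2,3,4}; element k is represented by the ordinal k-1. *)
Notation P4 := {set 'I_4}.

Definition e1 : 'I_4 := inord 0.
Definition e2 : 'I_4 := inord 1.
Definition e3 : 'I_4 := inord 2.
Definition e4 : 'I_4 := inord 3.

Definition gvec (A : P4) : {ffun P4 -> Z8} :=
  [ffun B : P4 => if A \subset B then 1 else 0].

Definition Zcoef (a : P4 -> Z8) : Prop :=
  [/\
      (val (a [set e2]) = 2 * val (a [set e1]) %[mod 4])%N /\
      (val (a [set e4]) = 2 * val (a [set e3]) %[mod 4])%N,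
      (forall A : P4, (2 <= #|A|)%N -> (2 %| val (a A))%N),
      (forall A : P4, (2 <= #|A|)%N -> A :&: [set e2; e4] != set0 ->
         (4 %| val (a A))%N)
    &
      (forall A : P4, [set e2; e4] \subset A -> a A = 0)].

(* Z : u is in Z iff its (unique) coefficients satisfy (Z1)-(Z4) *)
Definition Zrel (u : {ffun P4 -> Z8}) : Prop :=
  exists a : P4 -> Z8, (forall B : P4, u B = \sum_(A : P4) a A * gvec A B) /\ Zcoef a.

Definition preservesZ (n : nat) (f : ('I_n -> Z8) -> Z8) : Prop :=
  forall u : 'I_n -> {ffun P4 -> Z8},
    (forall i, Zrel (u i)) -> Zrel [ffun B => f (fun i => u i B)].

Definition In_set (n : nat) (alpha : {ffun 'I_n -> 'I_3}) : bool :=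
  (#|[set i | alpha i != ord0]| <= 2)%N.

Definition monom (n : nat) (alpha : {ffun 'I_n -> 'I_3}) (x : 'I_n -> Z8) : Z8 :=
  \prod_(i < n) x i ^+ alpha i.

(* Main.v *)
Set Warnings "-all".
Require Import Defs.
From mathcomp Require Import all_boot all_order all_algebra zify ring.
Import GRing.Theory.
Set Implicit Arguments. Unset Strict Implicit.
Local Open Scope ring_scope.

Lemma valM (x y : 'Z_8) : val (x * y) = ((val x * val y) %% 8)%N.
Proof. by []. Qed.
Lemma val2 : val (2 : 'Z_8) = 2%N. Proof. by []. Qed.
Lemma div2E (x : 'Z_8) : (2 %| val x)%N -> x = 2 * inZp (val x %/ 2).
Proof. move=> h; apply: val_inj; rewrite valM val2 /=. move: h; case: x => v hv /= h.
 change (Zp_trunc 8).+2 with 8%N in hv |- *. lia. Qed.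
Lemma pow3 : (2:'Z_8)^+3 = 0. Proof. by apply: val_inj. Qed.
Lemma dvd1 (t : 'Z_8) : (2 %| val ((2 * t)%R : 'Z_8))%N. Proof. rewrite valM val2. lia. Qed.
Lemma dvd2 (t : 'Z_8) : (4 %| val ((2 ^+ 2 * t)%R : 'Z_8))%N.
Proof. rewrite valM. rewrite expr2 valM val2. lia. Qed.

Lemma ne12 : e1 != e2. Proof. by rewrite -val_eqE /= !inordK. Qed.
Lemma ne14 : e1 != e4. Proof. by rewrite -val_eqE /= !inordK. Qed.
Lemma ne32 : e3 != e2. Proof. by rewrite -val_eqE /= !inordK. Qed.
Lemma ne34 : e3 != e4. Proof. by rewrite -val_eqE /= !inordK. Qed.
Lemma ne24 : e2 != e4. Proof. by rewrite -val_eqE /= !inordK. Qed.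

Definition S24 : P4 := [set e2; e4].
Definition w (A : P4) : nat := #|A :&: S24|.

Lemma cardS : #|S24| = 2%N. Proof. by rewrite /S24 cards2 ne24. Qed.
Lemma w_le2 (A : P4) : (w A <= 2)%N.
Proof. rewrite -cardS; exact: subset_leq_card (subsetIr _ _). Qed.
Lemma w_leA (A : P4) : (w A <= #|A|)%N.
Proof. exact: subset_leq_card (subsetIl _ _). Qed.
Lemma wU (A A' : P4) : (w (A :|: A') <= w A + w A')%N.
Proof. rewrite /w setIUl cardsU; exact: leq_subr. Qed.
Lemma w0 : w set0 = 0%N. Proof. by rewrite /w set0I cards0. Qed.
Lemma w_in x : x \in S24 -> w [set x] = 1%N.
Proof. by move=> hx; rewrite /w (setIidPl _) ?cards1 // sub1set. Qed.
Lemma w_out x : x \notin S24 -> w [set x] = 0%N.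
Proof.
move=> hx; rewrite /w; apply/eqP; rewrite cards_eq0; apply/eqP/setP => y.
rewrite in_setI in_set1 in_set0; case: eqP => // ->; by rewrite (negbTE hx).
Qed.
Lemma e1out : e1 \notin S24. Proof. by rewrite !inE negb_or ne12 ne14. Qed.
Lemma e3out : e3 \notin S24. Proof. by rewrite !inE negb_or ne32 ne34. Qed.
Lemma e2in : e2 \in S24. Proof. by rewrite !inE eqxx. Qed.
Lemma e4in : e4 \in S24. Proof. by rewrite !inE eqxx orbT. Qed.
Lemma w_full (A : P4) : S24 \subset A -> w A = 2%N.
Proof. by move=> h; rewrite /w (setIidPr h) cardS. Qed.
Lemma w2_full (A : P4) : w A = 2%N -> S24 \subset A.
Proof.
move=> h; apply/setIidPr/eqP; rewrite eqEcard subsetIr /=.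
by rewrite cardS -/(w A) h.
Qed.

Definition g (A B : P4) : 'Z_8 := if A \subset B then 1 else 0.

Definition Qf (F : P4 -> 'Z_8) := exists t : P4 -> 'Z_8,
  forall B, F B = \sum_(A : P4) 2 ^+ w A * t A * g A B.

Lemma Qf_ext F G : (forall B, F B = G B) -> Qf F -> Qf G.
Proof. by move=> e [t ht]; exists t => B; rewrite -e. Qed.
Arguments Qf_ext {F G}.

Lemma Qf_const c : Qf (fun _ => c).
Proof.
exists (fun A => if A == set0 then c else 0) => B.
rewrite (bigD1 set0) //= eqxx big1 ?addr0 => [|A /negbTE ->]; last by rewrite mulr0 mul0r.
by rewrite w0 expr0 mul1r /g sub0set mulr1.
Qed.

Lemma Qf_add F G : Qf F -> Qf G -> Qf (fun B => F B + G B).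
Proof.
move=> [t ht] [s hs]; exists (fun A => t A + s A) => B.
rewrite ht hs -big_split; apply: eq_bigr => A _ /=; ring.
Qed.

Lemma Qf_mul F G : Qf F -> Qf G -> Qf (fun B => F B * G B).
Proof.
move=> [t ht] [s hs].
exists (fun C => \sum_(A : P4) \sum_(A' : P4 | A :|: A' == C)
   2 ^+ (w A + w A' - w C) * t A * s A') => B.
rewrite ht hs big_distrl /=.
under eq_bigr => A _ do rewrite big_distrr /=.

apply: esym.
under eq_bigr => C _ do rewrite mulr_sumr mulr_suml /=.
rewrite exchange_big /=; apply: eq_bigr => A _.
under eq_bigr => C _ do rewrite mulr_sumr mulr_suml /=.
rewrite (exchange_big_dep predT) //=; apply: eq_bigr => A' _.
rewrite (big_pred1 (A :|: A')); last by move=> C /=; rewrite eq_sym.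
have E : (2:'Z_8) ^+ w (A :|: A') * 2 ^+ (w A + w A' - w (A :|: A'))
   = 2 ^+ w A * 2 ^+ w A' by rewrite -!exprD subnKC // wU.
have gU : g (A :|: A') B = g A B * g A' B.
  by rewrite /g subUset; case: (A \subset B); case: (A' \subset B); rewrite ?mulr1 ?mulr0.
rewrite gU; move: E.
move: (t A) (s A') (g A B) (g A' B) ((2:'Z_8) ^+ w (A :|: A')) (2 ^+ (w A + w A' - w (A :|: A'))).
move: ((2:'Z_8) ^+ w A) ((2:'Z_8) ^+ w A') => p q a b c d x y e.
transitivity ((x * y) * (a * b * c * d)); first ring.
rewrite e; ring.
Qed.

Lemma Qf_prod (I : Type) (r : seq I) (P : pred I) (G : I -> P4 -> 'Z_8) :
  (forall i, P i -> Qf (G i)) -> Qf (fun B => \prod_(i <- r | P i) G i B).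
Proof.
move=> h; elim: r => [|i r IH].
  by apply: (Qf_ext _ (Qf_const 1)) => B; rewrite big_nil.
case hi: (P i).
  by apply: (Qf_ext _ (Qf_mul (h i hi) IH)) => B; rewrite big_cons hi.
by apply: (Qf_ext _ IH) => B; rewrite big_cons hi.
Qed.

Lemma Qf_sum (I : Type) (r : seq I) (P : pred I) (G : I -> P4 -> 'Z_8) :
  (forall i, P i -> Qf (G i)) -> Qf (fun B => \sum_(i <- r | P i) G i B).
Proof.
move=> h; elim: r => [|i r IH].
  by apply: (Qf_ext _ (Qf_const 0)) => B; rewrite big_nil.
case hi: (P i).
  by apply: (Qf_ext _ (Qf_add (h i hi) IH)) => B; rewrite big_cons hi.
by apply: (Qf_ext _ IH) => B; rewrite big_cons hi.
Qed.

Lemma Qf_pow F k : Qf F -> Qf (fun B => F B ^+ k).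
Proof.
move=> h; elim: k => [|k IH].
  by apply: (Qf_ext _ (Qf_const 1)) => B; rewrite expr0.
by apply: (Qf_ext _ (Qf_mul h IH)) => B; rewrite exprS.
Qed.

Lemma coef_ex (a : P4 -> 'Z_8) : Zcoef a -> forall A, exists t, a A = 2 ^+ w A * t.
Proof.
case=> [[Z1a Z1b] Z2 Z3 Z4] A.
case hw: (w A) => [|[|[|k]]].
- by exists (a A); rewrite expr0 mul1r.
- exists (inZp (val (a A) %/ 2)); rewrite expr1; apply: div2E.
  case: (leqP 2 #|A|) => hA.
    have hne : A :&: [set e2; e4] != set0.
      by apply/eqP => h0; move: hw; rewrite /w /S24 h0 cards0.
    have := Z3 A hA hne; lia.
  have hA1 : #|A| = 1%N by have := w_leA A; lia.
  have [x Ax] := cards1P (introT eqP hA1); subst A.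
  case: (boolP (x \in S24)) => hx; last by move: hw; rewrite w_out.
  rewrite !inE in hx; case/orP: hx => /eqP ->; [move: Z1a | move: Z1b]; move: (\val (a _)) (\val (a _)) => p q; lia.
- by exists 0; rewrite mulr0; apply: Z4; apply: w2_full.
- by have := w_le2 A; rewrite hw.
Qed.

Lemma Zrel_Qf (u : {ffun P4 -> 'Z_8}) : Zrel u -> Qf (fun B => u B).
Proof.
case=> a [hu hc].
pose t A := odflt 0 [pick x | a A == 2 ^+ w A * x].
have ht A : a A = 2 ^+ w A * t A.
  rewrite /t; case: pickP => [x /eqP //|h].
  by have [x hx] := coef_ex hc A; move: (h x); rewrite hx eqxx.
exists t => B; rewrite hu; apply: eq_bigr => A _; by rewrite ffunE ht.
Qed.

Lemma Qf2_Zrel (u : {ffun P4 -> 'Z_8}) H : Qf H -> (forall B, u B = 2 * H B) -> Zrel u.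
Proof.
case=> t ht hu.
exists (fun A => 2 ^+ (w A).+1 * t A); split.
  move=> B; rewrite hu ht mulr_sumr; apply: eq_bigr => A _.
  by rewrite ffunE exprS !mulrA.
split.
- rewrite w_in ?e2in // w_out ?e1out // w_in ?e4in // w_out ?e3out //.
  rewrite !expr1.
  split.
    have := dvd2 (t [set e2]); have := dvd1 (t [set e1]).
    move: (\val _) (\val _) => p q; lia.
  have := dvd2 (t [set e4]); have := dvd1 (t [set e3]).
  move: (\val _) (\val _) => p q; lia.
- by move=> A _; rewrite exprS -mulrA dvd1.
- move=> A _ hne.
  have hw : (0 < w A)%N by rewrite lt0n /w cards_eq0.
  by rewrite -(subnKC hw) add1n !exprS !mulrA -expr2 -mulrA dvd2.
- move=> A hA; by rewrite w_full // pow3 mul0r.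
Qed.

Unset Implicit Arguments.

Theorem lemma3p6 (n : nat) (hn : (1 <= n)%N)
  (b : {ffun 'I_n -> 'I_3} -> 'Z_8)
  (hb : forall alpha, In_set alpha -> (2 %| val (b alpha))%N) :
  preservesZ (fun x : 'I_n -> 'Z_8 =>
    (\prod_(i < n) x i) *
    \sum_(alpha : {ffun 'I_n -> 'I_3} | In_set alpha) b alpha * monom alpha x).
Proof.
move=> u hu.
pose b2 alpha := inZp (val (b alpha) %/ 2) : 'Z_8.
have hb2 alpha : In_set alpha -> b alpha = 2 * b2 alpha.
  by move=> h; apply: div2E; apply: hb.
have Qu i : Qf (fun B => u i B) by apply: Zrel_Qf.
apply: (@Qf2_Zrel _ (fun B => (\prod_(i < n) u i B) *
   \sum_(alpha | In_set alpha) b2 alpha * monom alpha (fun i => u i B))).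
  apply: Qf_mul; first exact: Qf_prod.
  apply: Qf_sum => alpha _; apply: Qf_mul; first exact: Qf_const.
  by apply: Qf_prod => i _; apply: Qf_pow.
move=> B; rewrite ffunE.
rewrite (eq_bigr (fun alpha => 2 * (b2 alpha * monom alpha (fun i => u i B)))).
  by rewrite -mulr_sumr mulrCA.
by move=> alpha h; rewrite hb2 // mulrA.
Qed.
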